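(* For $\theta=(\theta_1,\ldots,\theta_n)$ and $1\le i<n$ one has \[ G_{\ldots,\theta_i,\theta_{i+1},\ldots}(x|t) = -\beta\, G_{\ldots,\theta_i+1,\theta_{i+1},\ldots}(x|t) - \frac{1+\beta t_{n+\theta_i-i+1}}{1+\beta t_{n+\theta_{i+1}-i}}\Big(G_{\ldots,\theta_{i+1}-1,\theta_i+1,\ldots}(x|t)+\beta\, G_{\ldots,\theta_{i+1},\theta_i+1,\ldots}(x|t)\Big), \] where only the $i$-th and $(i+1)$-th entries of the index are changed.
   Context: Let $\beta$ be a parameter, $x=(x_1,\ldots,x_n)$ variables and $t=(t_1,t_2,\ldots)$ equivariant parameters. Write $x\oplus y=x+y+\beta xy$ and define the $\beta$-deformed factorial power $(x|t)^r=\prod_{i=1}^r (x\oplus t_i)$. For a sequence $\theta=(\theta_1,\ldots,\theta_n)$ (a partition or, more generally, a sequence of integers for which the powers below make sense), the factorial Grothendieck polynomial is given by the determinant formula (Ikeda–Naruse) \[ G_\theta(x|t)=\frac{\det\big[(x_j|t)^{\theta_i+n-i}(1+\beta x_j)^{i-1}\big]_{1\le i,j\le n}}{\det\big[x_j^{n-i}\big]_{1\le i,j\le n}}, \] the denominator being the Vandermonde determinant $\prod_{i<j}(x_i-x_j)$; this determinant formula is used to define $G_\theta$ for non-partition indices $\theta$ appearing in the statement. *)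

(* Defs.v *)
From mathcomp Require Import all_boot all_order all_algebra.
Set Implicit Arguments. Unset Strict Implicit. Unset Printing Implicit Defensive.
Import Order.TTheory GRing.Theory Num.Theory.
Local Open Scope ring_scope.

Definition boplus {F : fieldType} (beta x y : F) : F := x + y + beta * x * y.

(* factorial power (x|t)^r = prod_{k=1}^r (x (+) t_k); t is 1-indexed (t 0 unused) *)
Definition fpow {F : fieldType} (beta : F) (t : nat -> F) (x : F) (r : nat) : F :=
  \prod_(1 <= k < r.+1) boplus beta x (t k).

(* integer exponent: only used when the exponent is >= 0 (guarded by hypotheses);
   value 0 for negative exponents is an irrelevant placeholder *)
Definition fpowz {F : fieldType} (beta : F) (t : nat -> F) (x : F) (r : int) : F :=
  match r with Posz m => fpow beta t x m | Negz _ => 0 end.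

(* factorial Grothendieck polynomial via the Ikeda--Naruse determinant formula.
   theta is 1-indexed: theta 1, ..., theta n; x : 'I_n -> F are the variables. *)
Definition Gfact {F : fieldType} (n : nat) (beta : F) (t : nat -> F)
    (theta : nat -> int) (x : 'I_n -> F) : F :=
  \det (\matrix_(a < n, b < n)
          (fpowz beta t (x b) (theta a.+1 + n%:Z - (a.+1)%:Z) * (1 + beta * x b) ^+ a))
  / \det (\matrix_(a < n, b < n) (x b ^+ (n - a.+1))).

Definition upd2 (theta : nat -> int) (i : nat) (u v : int) : nat -> int :=
  fun j => if j == i then u else if j == i.+1 then v else theta j.

(* Main.v *)
Require Import Defs.
From mathcomp Require Import all_boot all_order all_algebra.
From mathcomp Require Import ring.
Set Implicit Arguments. Unset Strict Implicit. Unset Printing Implicit Defensive.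
Import Order.TTheory GRing.Theory Num.Theory.
Local Open Scope ring_scope.

Section Aux.
Variables (F : fieldType) (n : nat).
Variables (k1 k2 : 'I_n) (base : 'M[F]_n).
Hypothesis k12 : k1 != k2.

Definition Mx (p q : 'rV[F]_n) : 'M[F]_n :=
  \matrix_(a < n, b < n) (if a == k1 then p 0 b else if a == k2 then q 0 b else base a b).

Definition D p q := \det (Mx p q).

Lemma D_linl a b p p' q : D (a *: p + b *: p') q = a * D p q + b * D p' q.
Proof.
apply: (determinant_multilinear (i0:=k1)).
- by apply/rowP => j; rewrite !mxE eqxx.
- apply/matrixP => r j; rewrite !mxE.
  by have /negbTE -> : lift k1 r != k1 by rewrite eq_sym neq_lift.
- apply/matrixP => r j; rewrite !mxE.
  by have /negbTE -> : lift k1 r != k1 by rewrite eq_sym neq_lift.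
Qed.

Lemma D_linr a b p q q' : D p (a *: q + b *: q') = a * D p q + b * D p q'.
Proof.
have k21 : (k2 == k1) = false by rewrite eq_sym (negbTE k12).
apply: (determinant_multilinear (i0:=k2)).
- by apply/rowP => j; rewrite !mxE eqxx k21.
- apply/matrixP => r j; rewrite !mxE; case: ifP => // _.
  by have /negbTE -> : lift k2 r != k2 by rewrite eq_sym neq_lift.
- apply/matrixP => r j; rewrite !mxE; case: ifP => // _.
  by have /negbTE -> : lift k2 r != k2 by rewrite eq_sym neq_lift.
Qed.

Lemma D_alt p : D p p = 0.
Proof.
apply: (determinant_alternate k12) => j.
by rewrite !mxE eqxx eq_sym (negbTE k12) eqxx.
Qed.

Lemma D_anti p q : D q p = - D p q.
Proof.
have := D_alt (1 *: p + 1 *: q).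
rewrite D_linl !D_linr !D_alt.
move=> h; apply/eqP; rewrite -subr_eq0 opprK; apply/eqP; rewrite -h; ring.
Qed.
Lemma D_scalel c p q : D p (c *: q) = c * D p q.
Proof. by have := D_linr c 0 p q q; rewrite scale0r addr0 mul0r addr0. Qed.
Lemma D_scalel' c p q : D (c *: p) q = c * D p q.
Proof. by have := D_linl c 0 p p q; rewrite scale0r addr0 mul0r addr0. Qed.
End Aux.

From mathcomp Require Import zify.

Definition rv {F : fieldType} (n : nat) (beta : F) (t : nat -> F) (x : 'I_n -> F)
  (r e : nat) : 'rV[F]_n := \row_b (fpow beta t (x b) r * (1 + beta * x b) ^+ e).

Definition rowz {F : fieldType} (n : nat) (beta : F) (t : nat -> F) (x : 'I_n -> F)
  (u : int) (m e : nat) : 'rV[F]_n :=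
  \row_b (fpowz beta t (x b) (u + n%:Z - m%:Z) * (1 + beta * x b) ^+ e).

Definition GM {F : fieldType} (n : nat) (beta : F) (t : nat -> F) (x : 'I_n -> F)
  (th : nat -> int) : 'M[F]_n :=
  \matrix_(a < n, b < n)
     (fpowz beta t (x b) (th a.+1 + n%:Z - (a.+1)%:Z) * (1 + beta * x b) ^+ a).

Lemma rowz_rv {F : fieldType} (n : nat) (beta : F) t x u m e r :
  u + n%:Z - m%:Z = r%:Z -> rowz beta t x u m e = rv (n:=n) beta t x r e.
Proof. by move=> h; apply/rowP => j; rewrite !mxE h. Qed.

Lemma rv_key {F : fieldType} (n : nat) (beta : F) t x r e :
  rv (n:=n) beta t x r e + beta *: rv beta t x r.+1 e
  = (1 + beta * t r.+1) *: rv beta t x r e.+1.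
Proof.
apply/rowP => j; rewrite !mxE /fpow [\prod_(1 <= k < r.+2) _]big_nat_recr //= /boplus exprS; ring.
Qed.

Lemma GM_Mx {F : fieldType} (n k : nat) (beta : F) t x theta th u v
  (hk : (k.+1 < n)%N) :
  (forall j, j != k.+1 -> j != k.+2 -> th j = theta j) -> th k.+1 = u -> th k.+2 = v ->
  GM beta t x th = Mx (Ordinal (ltnW hk)) (Ordinal hk) (GM beta t x theta)
     (rowz beta t x u k.+1 k) (rowz beta t x v k.+2 k.+1).
Proof.
move=> hth hu hv; apply/matrixP => a b; rewrite !mxE.
case: eqP => [-> /=|ha]; first by rewrite hu.
case: eqP => [-> /=|hb]; first by rewrite hv.
rewrite hth //.
  by apply/eqP => [[e]]; apply: ha; apply: val_inj.
by apply/eqP => [[e]]; apply: hb; apply: val_inj.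
Qed.

Theorem mainTheorem6 (F : fieldType) (n : nat) (beta : F) (t : nat -> F)
    (x : 'I_n -> F) (theta : nat -> int) (i : nat) :
  (1 <= i)%N -> (i < n)%N ->
  injective x ->
  (forall j : nat, (1 <= j <= n)%N -> 0 <= theta j + n%:Z - j%:Z) ->
  1 + beta * t (absz (n%:Z + theta i.+1 - i%:Z)%R) != 0 ->
  Gfact beta t theta x =
    - beta * Gfact beta t (upd2 theta i (theta i + 1) (theta i.+1)) x
    - (1 + beta * t (absz (n%:Z + theta i - i%:Z + 1)%R))
        / (1 + beta * t (absz (n%:Z + theta i.+1 - i%:Z)%R))
      * (Gfact beta t (upd2 theta i (theta i.+1 - 1) (theta i + 1)) x
         + beta * Gfact beta t (upd2 theta i (theta i.+1) (theta i + 1)) x).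
Proof.
case: i => [//|k] _ hk _ hpos.
have hA := hpos k.+1; have hB := hpos k.+2.
have /hA {}hA : (1 <= k.+1 <= n)%N by rewrite /= ltnW.
have /hB {}hB : (1 <= k.+2 <= n)%N by [].
set A := absz (theta k.+1 + n%:Z - k.+1%:Z)%R.
set B := absz (theta k.+2 + n%:Z - k.+2%:Z)%R.
have eA : theta k.+1 + n%:Z - k.+1%:Z = A%:Z by rewrite /A gez0_abs.
have eB : theta k.+2 + n%:Z - k.+2%:Z = B%:Z by rewrite /B gez0_abs.
have -> : absz (n%:Z + theta k.+2 - k.+1%:Z)%R = B.+1.
  by have -> : n%:Z + theta k.+2 - k.+1%:Z = (B.+1)%:Z by lia.
have -> : absz (n%:Z + theta k.+1 - k.+1%:Z + 1)%R = A.+1.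
  by have -> : n%:Z + theta k.+1 - k.+1%:Z + 1 = (A.+1)%:Z by lia.
move=> hb.
set V := \det (\matrix_(a < n, b < n) (x b ^+ (n - a.+1))).
have GE th : Gfact beta t th x = \det (GM beta t x th) / V by [].
have U1 u v j : j != k.+1 -> j != k.+2 -> upd2 theta k.+1 u v j = theta j.
  by move=> h1 h2; rewrite /upd2 (negbTE h1) (negbTE h2).
have U2 u v : upd2 theta k.+1 u v k.+1 = u by rewrite /upd2 eqxx.
have U3 u v : upd2 theta k.+1 u v k.+2 = v by rewrite /upd2 (gtn_eqF (ltnSn _)) eqxx.
rewrite !GE !(GM_Mx _ _ _ hk (U1 _ _) (U2 _ _) (U3 _ _)).
rewrite {1}(@GM_Mx _ _ _ beta t x theta theta _ _ hk (fun _ _ _ => erefl) erefl erefl).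
have k12 : Ordinal (ltnW hk) != Ordinal hk.
  by apply/eqP => -[]; lia.
rewrite !(@rowz_rv _ _ _ _ _ _ _ _ _ eA) !(@rowz_rv _ _ _ _ _ _ _ _ _ eB).
rewrite !(@rowz_rv _ _ _ _ _ (theta k.+1 + 1) k.+1 _ A.+1); last by lia.
rewrite !(@rowz_rv _ _ _ _ _ (theta k.+2 - 1) k.+1 _ B); last by lia.
rewrite !(@rowz_rv _ _ _ _ _ (theta k.+1 + 1) k.+2 _ A); last by lia.
rewrite !(@rowz_rv _ _ _ _ _ (theta k.+2) k.+1 _ B.+1); last by lia.
set D' := D (Ordinal (ltnW hk)) (Ordinal hk) (GM beta t x theta).
have h1 := D_linl (Ordinal (ltnW hk)) (Ordinal hk) (GM beta t x theta) 1 beta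
   (rv beta t x A k) (rv beta t x A.+1 k) (rv beta t x B k.+1).
rewrite scale1r rv_key D_scalel' !mul1r in h1.
have h2 := D_linl (Ordinal (ltnW hk)) (Ordinal hk) (GM beta t x theta) 1 beta
   (rv beta t x B k) (rv beta t x B.+1 k) (rv beta t x A k.+1).
rewrite scale1r rv_key D_scalel' !mul1r (@D_anti _ _ _ _ (GM beta t x theta) k12 (rv beta t x A k.+1)) in h2.
rewrite /D /D' in h1 h2.
move: h1 h2; move: (V^-1) => iV.
set M := Mx _ _ _.
move: (\det (M (rv beta t x A k) (rv beta t x B k.+1))) => X.
move: (\det (M (rv beta t x A.+1 k) (rv beta t x B k.+1))) => Y.
move: (\det (M (rv beta t x B k) (rv beta t x A k.+1))) => Z.
move: (\det (M (rv beta t x B.+1 k) (rv beta t x A k.+1))) => W.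
move: (\det (M (rv beta t x A k.+1) (rv beta t x B k.+1))) => U.
move=> h1 h2.
have -> : X = (1 + beta * t A.+1) * U - beta * Y by rewrite h1; ring.
have -> : Z = (1 + beta * t B.+1) * - U - beta * W by rewrite h2; ring.
by field.
Qed.
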